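(* Let $\mathcal{F}$ be a fusion ring with structure constants $(N_{i,j}^k)$, index $1$ being the unit. Suppose there is an index $k_0$ such that $N_{i,j}^{k_0}\neq0$ for all indices $i,j\neq1$. Then $\mathcal{F}$ passes the zero spectrum criterion, i.e. there are no indices $i_1,\dots,i_9$ satisfying all of the following: (1) $N_{i_4,i_1}^{i_6},\ N_{i_5,i_4}^{i_2},\ N_{i_5,i_6}^{i_3},\ N_{i_7,i_9}^{i_1},\ N_{i_2,i_7}^{i_8},\ N_{i_8,i_9}^{i_3}\neq0$; (2) $\sum_kN_{i_4,i_7}^kN_{i_5^*,i_8}^kN_{i_6,i_9^*}^k=0$; (3) $N_{i_2,i_1}^{i_3}=1$; (4) $\sum_kN_{i_5,i_4}^kN_{i_3,i_1^*}^k=1$ or $\sum_kN_{i_2,i_4^*}^kN_{i_3,i_6^*}^k=1$ or $\sum_kN_{i_5^*,i_2}^kN_{i_6,i_1^*}^k=1$; (5) $\sum_kN_{i_2,i_7}^kN_{i_3,i_9^*}^k=1$ or $\sum_kN_{i_8,i_7^*}^kN_{i_3,i_1^*}^k=1$ or $\sum_kN_{i_2^*,i_8}^kN_{i_1,i_9^*}^k=1$.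
   Context: A fusion ring is a ring which is a free $\mathbb{Z}$-module with finite basis $\{b_1,\dots,b_r\}$, $b_ib_j=\sum_kN_{i,j}^kb_k$, $N_{i,j}^k\in\mathbb{Z}_{\ge0}$, associative, unit $b_1$, duality $i\mapsto i^*$ with $N_{i,k}^1=N_{k,i}^1=\delta_{i^*,k}$, and Frobenius reciprocity $N_{i,j}^k=N_{i^*,k}^j=N_{k,j^*}^i$. (If indices as in (1)–(5) exist, the fusion ring admits no categorification over any field; ''passing the zero spectrum criterion'' means no such indices exist.) *)

(* Defs.v *)
From mathcomp Require Import all_boot.
Set Implicit Arguments.
Unset Strict Implicit.
Unset Printing Implicit Defensive.

(* A fusion ring of rank r.+1 with basis b_0, ..., b_r, given by its structure
   constants N i j k = N_{i,j}^k (b_i b_j = \sum_k N_{i,j}^k b_k) and its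
   duality d : i |-> i^*.  The unit is the basis element of index ord0
   (index "1" in the paper). *)
Definition fusion_ring (r : nat) (N : 'I_r.+1 -> 'I_r.+1 -> 'I_r.+1 -> nat)
    (d : 'I_r.+1 -> 'I_r.+1) : Prop :=
  [/\
      (forall i j k l : 'I_r.+1,
         \sum_(m < r.+1) N i j m * N m k l = \sum_(m < r.+1) N j k m * N i m l),
      (forall i j : 'I_r.+1, N ord0 i j = (i == j) /\ N i ord0 j = (i == j)),
      (forall i k : 'I_r.+1, N i k ord0 = (d i == k) /\ N k i ord0 = (d i == k))
    &
      (forall i j k : 'I_r.+1, N i j k = N (d i) k j /\ N i j k = N k (d j) i)].

Definition zero_spectrum_indices (r : nat)
    (N : 'I_r.+1 -> 'I_r.+1 -> 'I_r.+1 -> nat) (d : 'I_r.+1 -> 'I_r.+1)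
    (i1 i2 i3 i4 i5 i6 i7 i8 i9 : 'I_r.+1) : Prop :=
  [/\
      ([/\ N i4 i1 i6 != 0, N i5 i4 i2 != 0 & N i5 i6 i3 != 0] /\
       [/\ N i7 i9 i1 != 0, N i2 i7 i8 != 0 & N i8 i9 i3 != 0]),
      \sum_(k < r.+1) N i4 i7 k * N (d i5) i8 k * N i6 (d i9) k = 0,
      N i2 i1 i3 = 1,
      [\/ \sum_(k < r.+1) N i5 i4 k * N i3 (d i1) k = 1,
          \sum_(k < r.+1) N i2 (d i4) k * N i3 (d i6) k = 1 |
          \sum_(k < r.+1) N (d i5) i2 k * N i6 (d i1) k = 1]
    &
      [\/ \sum_(k < r.+1) N i2 i7 k * N i3 (d i9) k = 1,
          \sum_(k < r.+1) N i8 (d i7) k * N i3 (d i1) k = 1 |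
          \sum_(k < r.+1) N (d i2) i8 k * N i1 (d i9) k = 1]].

Definition passes_zero_spectrum (r : nat)
    (N : 'I_r.+1 -> 'I_r.+1 -> 'I_r.+1 -> nat) (d : 'I_r.+1 -> 'I_r.+1) : Prop :=
  ~ exists i1 i2 i3 i4 i5 i6 i7 i8 i9 : 'I_r.+1,
      zero_spectrum_indices N d i1 i2 i3 i4 i5 i6 i7 i8 i9.

(* Main.v *)
Require Import Defs.
From mathcomp Require Import all_boot.

Theorem lemma7p15 (r : nat) (N : 'I_r.+1 -> 'I_r.+1 -> 'I_r.+1 -> nat)
    (d : 'I_r.+1 -> 'I_r.+1) :
  fusion_ring N d ->
  (exists k0 : 'I_r.+1, forall i j : 'I_r.+1,
       i != ord0 -> j != ord0 -> N i j k0 != 0) ->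
  passes_zero_spectrum N d.
Proof.
case=> _ Hunit Hdual Hfrob [k0 Hk0].
have F1 i j k : N i j k = N (d i) k j by case: (Hfrob i j k).
have F2 i j k : N i j k = N k (d j) i by case: (Hfrob i j k).
have U1 i j : N ord0 i j != 0 -> i = j.
  by case: (Hunit i j) => -> _; case: (i =P j).
have U2 i j : N i ord0 j != 0 -> i = j.
  by case: (Hunit i j) => _ ->; case: (i =P j).
have U3 i j : N i j ord0 != 0 -> d i = j.
  by case: (Hdual i j) => -> _; case: (d i =P j).
have dd i : d (d i) = i.
  apply: U3; case: (Hdual i (d i)) => _ ->; by rewrite eqxx.
have d0 : d ord0 = ord0.
  apply: U3; case: (Hunit ord0 ord0) => ->; by rewrite eqxx.
have dz i : d i = ord0 -> i = ord0 by move=> h; rewrite -(dd i) h d0.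
move=> [i1 [i2 [i3 [i4 [i5 [i6 [i7 [i8 [i9 [[[A1 A2 A3] [A4 A5 A6]] S _ _ _]]]]]]]]]].
have H0 : forall k, N i4 i7 k * N (d i5) i8 k * N i6 (d i9) k = 0.
  move=> k; apply/eqP; move/eqP: S; rewrite sum_nat_eq0 => /forallP /(_ k).
  by [].
have C k : N i4 i7 k != 0 -> N (d i5) i8 k != 0 -> N i6 (d i9) k != 0 -> False.
  move=> a b c; move: (H0 k) => /eqP; by rewrite !muln_eq0 (negbTE a) (negbTE b) (negbTE c).
case: (eqVneq i4 ord0) => [e4|n4].
  subst i4; move/U2: A2 => e; move/U1: A1 => e'; subst.
  apply: (C i7); first by case: (Hunit i7 i7) => ->; rewrite eqxx.
    by rewrite -F1.
  by rewrite -F2.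
case: (eqVneq i7 ord0) => [e7|n7].
  subst i7; move/U2: A5 => e; move/U1: A4 => e'; subst.
  apply: (C i4); first by case: (Hunit i4 i4) => _ ->; rewrite eqxx.
    by rewrite -F1.
  by rewrite -F2.
case: (eqVneq (d i5) ord0) => [e5|n5].
  move/dz: (e5) => e5'; subst i5; rewrite e5 in C.
  move/U1: A2 => e; move/U1: A3 => e'; subst.
  apply: (C i8) => //; first by case: (Hunit i8 i8) => ->; rewrite eqxx.
  by rewrite -F2.
case: (eqVneq i8 ord0) => [e8|n8].
  subst i8; move/U3: A5 => e; move/U1: A6 => e'; subst.
  apply: (C (d i5)); last by rewrite -F2 -F1.
    by rewrite -F2 -F1.
  by case: (Hunit (d i5) (d i5)) => _ ->; rewrite eqxx.
case: (eqVneq i6 ord0) => [e6|n6].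
  subst i6; move/U3: A1 => e; move/U2: A3 => e'; subst.
  apply: (C (d i9)); last by case: (Hunit (d i9) (d i9)) => ->; rewrite eqxx.
    by rewrite -(dd i4) -F1 -F2.
  by rewrite -F1 -F2.
case: (eqVneq (d i9) ord0) => [e9|n9].
  move/dz: (e9) => e9'; subst i9; rewrite e9 in C.
  move/U2: A4 => e; move/U2: A6 => e'; subst.
  apply: (C i6) => //; first by rewrite -F1.
  by case: (Hunit i6 i6) => _ ->; rewrite eqxx.
by apply: (C k0); apply: Hk0.
Qed.
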